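(* Suppose that for every $j\ge 0$ the map $F_j$ is nondecreasing in its first argument on $V^k$. Then for every $m\ge 0$, the maps $F_m$ and $F_{m+1}$ have the same fixed points.
   Context: Let $k\ge 2$ be an integer, $V\subseteq\mathbb{R}$ an interval, and $F_0:V^k\to V$ a map. Define maps $F_m:V^k\to V$ recursively by $$F_{m+1}(u_1,\dots,u_k)=F_m\big(F_0(u_1,\dots,u_k),u_1,\dots,u_{k-1}\big),\qquad m\ge 0.$$ A fixed point of $F_m$ is a point $x\in V$ with $F_m(x,\dots,x)=x$. *)

(* Defs.v *)
From mathcomp Require Import all_boot.
From Stdlib Require Import Reals.
Set Implicit Arguments. Unset Strict Implicit.

Open Scope R_scope.

Definition is_interval (V : R -> Prop) : Prop :=
  forall x y z, V x -> V z -> x <= y -> y <= z -> V y.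

Definition inVk (k : nat) (V : R -> Prop) (u : 'I_k -> R) : Prop :=
  forall i, V (u i).

(* shift a x u = (x, u_1, ..., u_{k-1}) *)
Definition shift (k : nat) (x : R) (u : 'I_k -> R) : 'I_k -> R :=
  fun i => match nat_of_ord i with
           | 0%N => x
           | j.+1 => match (ltnP j k) with
                     | LtnNotGeq Hj => u (Ordinal Hj)
                     | GeqNotLtn _ => x (* unreachable *)
                     end
           end.

Fixpoint Fiter (k : nat) (F0 : ('I_k -> R) -> R) (m : nat) : ('I_k -> R) -> R :=
  match m with
  | 0%N => F0
  | m'.+1 => fun u => Fiter F0 m' (shift (F0 u) u)
  end.

Definition diag (k : nat) (x : R) : 'I_k -> R := fun _ => x.

Definition is_fixed_point (k : nat) (V : R -> Prop) (G : ('I_k -> R) -> R) (x : R) : Prop :=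
  V x /\ G (@diag k x) = x.

Definition nondecr_first (k : nat) (V : R -> Prop) (G : ('I_k -> R) -> R) : Prop :=
  forall u w : 'I_k -> R, inVk V u -> inVk V w ->
    (forall i : 'I_k, (nat_of_ord i <> 0)%nat -> u i = w i) ->
    (forall i : 'I_k, (nat_of_ord i = 0)%nat -> u i <= w i) ->
    G u <= G w.

(* Main.v *)
Require Import Defs.
From mathcomp Require Import all_boot.
From Stdlib Require Import Reals Lra FunctionalExtensionality.
Open Scope R_scope.

Lemma shift_diag_val (k : nat) (y x : R) (i : 'I_k) :
  shift y (@diag k x) i = if (nat_of_ord i == 0%nat) then y else x.
Proof.
  rewrite /shift; case: i => [[|j] Hj] /=; first by [].
  case: (ltnP j k) => // H.
  by rewrite leqNgt (ltnW Hj) in H.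
Qed.

Lemma shift_diag_same (k : nat) (x : R) : shift x (@diag k x) = diag x.
Proof.
  apply: functional_extensionality => i; rewrite shift_diag_val /diag.
  by case: (_ == _).
Qed.

Lemma Fiter_fix (k : nat) (F0 : ('I_k -> R) -> R) x :
  F0 (diag x) = x -> forall m, Fiter F0 m (diag x) = x.
Proof.
  move=> H; elim=> [|m IH] //=.
  by rewrite H shift_diag_same.
Qed.

Lemma step_le (k : nat) (V : R -> Prop) (F0 : ('I_k -> R) -> R) x :
  (forall u, inVk V u -> V (F0 u)) ->
  (forall j : nat, nondecr_first V (Fiter F0 j)) -> V x ->
  forall m,
  (x <= F0 (diag x) -> Fiter F0 m (diag x) <= Fiter F0 m.+1 (diag x)) /\
  (F0 (diag x) <= x -> Fiter F0 m.+1 (diag x) <= Fiter F0 m (diag x)).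
Proof.
  move=> HF Hmon Vx m.
  have Hd : inVk V (@diag k x) by move=> i.
  have Hs : inVk V (shift (F0 (diag x)) (@diag k x)).
    by move=> i; rewrite shift_diag_val; case: (_ == _) => //; apply: HF.
  split=> Hle /=.
  - apply: Hmon => // i Hi; rewrite shift_diag_val /diag.
      by move/eqP/negbTE: Hi => ->.
    by move/eqP: Hi => ->.
  - apply: Hmon => // i Hi; rewrite shift_diag_val /diag.
      by move/eqP/negbTE: Hi => ->.
    by move/eqP: Hi => ->.
Qed.

Lemma fix_char (k : nat) (V : R -> Prop) (F0 : ('I_k -> R) -> R) x :
  (forall u, inVk V u -> V (F0 u)) ->
  (forall j : nat, nondecr_first V (Fiter F0 j)) -> V x ->
  forall m, Fiter F0 m (diag x) = x <-> F0 (diag x) = x.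
Proof.
  move=> HF Hmon Vx m; split; last by move=> H; apply: Fiter_fix.
  move=> Hm.
  destruct (Rtotal_order (F0 (diag x)) x) as [Hlt|[Heq|Hgt]] => //.
  - have : forall n, Fiter F0 n (diag x) <= F0 (diag x).
      elim=> [|n IH] /=; first lra.
      have := proj2 (step_le _ _ _ _ HF Hmon Vx n) (Rlt_le _ _ Hlt); simpl; lra.
    move=> /(_ m); lra.
  - have : forall n, F0 (diag x) <= Fiter F0 n (diag x).
      elim=> [|n IH] /=; first lra.
      have := proj1 (step_le _ _ _ _ HF Hmon Vx n) (Rlt_le _ _ Hgt); simpl; lra.
    move=> /(_ m); lra.
Qed.

Theorem mainTheorem2 (k : nat) (V : R -> Prop) (F0 : ('I_k -> R) -> R) :
  (2 <= k)%nat ->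
  is_interval V ->
  (forall u, inVk V u -> V (F0 u)) ->
  (forall j : nat, nondecr_first V (Fiter F0 j)) ->
  forall m : nat, forall x : R,
    is_fixed_point V (Fiter F0 m) x <-> is_fixed_point V (Fiter F0 m.+1) x.
Proof.
  move=> _ _ HF Hmon m x; rewrite /is_fixed_point; split=> [[Vx H]|[Vx H]]; split=> //.
  - by apply/(fix_char _ _ _ _ HF Hmon Vx); apply/(fix_char _ _ _ _ HF Hmon Vx m).
  - by apply/(fix_char _ _ _ _ HF Hmon Vx); apply/(fix_char _ _ _ _ HF Hmon Vx m.+1).
Qed.
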